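(* Let $\mathbb{F}$ be a finite field of cardinality $2^m$ with $m\geq 2$, and let $A\in M_n(\mathbb{F})$. Then there exist $N,D\in M_n(\mathbb{F})$ with $A=N+D$, $N^2=0$ and $D^{2^m}=D$. *)

(* Defs.v *)
From mathcomp Require Import all_boot all_algebra.
Set Implicit Arguments. Unset Strict Implicit. Unset Printing Implicit Defensive.
Import GRing.Theory.
Local Open Scope ring_scope.

(* Power of a square matrix of arbitrary size n (including n = 0, where
   'M_n has no ring structure): D ^ k = D *m ... *m D (k factors), D ^ 0 = 1. *)
Definition mxpow (R : pzRingType) (n : nat) (D : 'M[R]_n) (k : nat) : 'M[R]_n :=
  iter k (mulmx D) 1%:M.

(* Main.v *)
Require Import Defs.
From mathcomp Require Import all_boot all_algebra finfield ring.
Set Implicit Arguments. Unset Strict Implicit. Unset Printing Implicit Defensive.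
Import GRing.Theory.
Local Open Scope ring_scope.

Section Main.
Variable F : finFieldType.
Hypothesis char2 : (2%:R : F) = 0.
Hypothesis card4 : (4 <= #|F|)%N.

Lemma addxx (x : F) : x + x = 0.
Proof. by rewrite -mulr2n -mulr_natr char2 mulr0. Qed.

Lemma oppF (x : F) : - x = x.
Proof. by apply/eqP; rewrite eq_sym -subr_eq0 opprK addxx. Qed.

Definition Dec n (A : 'M[F]_n) := exists N D : 'M[F]_n,
  [/\ A = N + D, N *m N = 0 & mxpow D #|F| = D].

Lemma mxpowS n (D : 'M[F]_n) j : mxpow D j.+1 = D *m mxpow D j.
Proof. by []. Qed.

Lemma mxpow_exp k (D : 'M[F]_k.+1) j : mxpow D j = D ^+ j.
Proof. elim: j => [|j IH]; first by rewrite expr0. by rewrite mxpowS IH exprS. Qed.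

Lemma Dec0 (A : 'M[F]_0) : Dec A.
Proof.
exists 0, 0; split; [by apply/matrixP=> [[]] | by rewrite mul0mx | by apply/matrixP=> [[]]].
Qed.

Lemma Dec_conj n m (Q : 'M[F]_(n, m)) (P : 'M[F]_(m, n)) (B : 'M[F]_m) :
  Q *m P = 1%:M -> P *m Q = 1%:M -> Dec B -> Dec (Q *m B *m P).
Proof.
move=> QP PQ [N [D [-> N2 DP]]].
have pw X j : mxpow (Q *m X *m P) j = Q *m mxpow X j *m P.
  elim: j => [|j IH]; first by rewrite /= mulmx1 QP.
  by rewrite !mxpowS IH !mulmxA -(mulmxA _ P Q) PQ mulmx1.
exists (Q *m N *m P), (Q *m D *m P); split.
- by rewrite mulmxDr mulmxDl.
- by rewrite !mulmxA -(mulmxA _ P Q) PQ mulmx1 -(mulmxA Q N N) N2 mulmx0 mul0mx.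
- by rewrite pw DP.
Qed.

Lemma Dec_block k l (B1 : 'M[F]_k) (B2 : 'M[F]_l) :
  Dec B1 -> Dec B2 -> Dec (block_mx B1 0 0 B2).
Proof.
move=> [N1 [D1 [-> N12 D1P]]] [N2 [D2 [-> N22 D2P]]].
have pw j : mxpow (block_mx D1 0 0 D2) j = block_mx (mxpow D1 j) 0 0 (mxpow D2 j).
  elim: j => [|j IH]; first by rewrite /= scalar_mx_block.
  by rewrite !mxpowS IH mulmx_block !mulmx0 !mul0mx !addr0 !add0r.
exists (block_mx N1 0 0 N2), (block_mx D1 0 0 D2); split.
- by rewrite add_block_mx !addr0.
- by rewrite mulmx_block !mulmx0 !mul0mx !addr0 !add0r N12 N22 block_mx0.
- by rewrite pw D1P D2P.
Qed.

Definition pl (s : seq F) : {poly F} := \prod_(x <- s) ('X - x%:P).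

Lemma pl_dvd (s S : seq F) : uniq s -> uniq S -> {subset s <= S} -> pl s %| pl S.
Proof.
move=> us uS sS; rewrite /pl !big_uniq //=.
rewrite [X in _ %| X](bigID (fun x => x \in s)) /=; apply: dvdp_mulr.
rewrite [X in _ %| X](eq_bigl (fun x => x \in s)) ?dvdpp // => x.
by apply/andP/idP => [[]|xs] //; split => //; apply: sS.
Qed.

Lemma pl_dvd_all (S : seq F) : uniq S -> pl S %| 'X^#|F| - 'X.
Proof.
move=> uS; rewrite finField_genPoly; rewrite /pl big_uniq //=.
rewrite [X in _ %| X](bigID (fun x => x \in S)) /=; apply: dvdp_mulr.
by rewrite (eq_bigl (fun x => x \in S)) ?dvdpp.
Qed.

Lemma potent_kill k (D : 'M[F]_k.+1) (S : seq F) :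
  uniq S -> horner_mx D (pl S) = 0 -> mxpow D #|F| = D.
Proof.
move=> uS h; have /dvdpP [r Er] := pl_dvd_all uS.
have : horner_mx D ('X^#|F| - 'X) = 0 by rewrite Er rmorphM /= h mulr0.
rewrite rmorphB rmorphXn /= horner_mx_X => /eqP; rewrite subr_eq0 => /eqP.
by rewrite mxpow_exp.
Qed.

Lemma kill_rows k (D : 'M[F]_k.+1) (S : seq F) :
  uniq S ->
  (forall i : 'I_k.+1, exists2 s, uniq s /\ {subset s <= S} &
     (delta_mx 0 i : 'rV_k.+1) *m horner_mx D (pl s) = 0) ->
  mxpow D #|F| = D.
Proof.
move=> uS h; apply: (potent_kill uS); apply/row_matrixP => i.
rewrite rowE row0; have [s [us sS] ki] := h i.
have /dvdpP [r ->] := pl_dvd us uS sS.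
rewrite rmorphM /= (comm_horner_mx2 D r (pl s)).
by rewrite [X in _ *m X]/GRing.mul /= mulmxA ki mul0mx.
Qed.

Lemma pl_cons k (D : 'M[F]_k.+1) x s :
  horner_mx D (pl (x :: s)) = (D - x%:M) *m horner_mx D (pl s).
Proof. by rewrite /pl big_cons rmorphM rmorphB /= horner_mx_X horner_mx_C. Qed.

Lemma pl_nil k (D : 'M[F]_k.+1) : horner_mx D (pl [::]) = 1.
Proof. by rewrite /pl big_nil rmorph1. Qed.

End Main.


Ltac subl := let x := fresh "x" in let H := fresh "H" in
  move=> x; rewrite !inE => H; repeat (case/orP: H => H); move/eqP: H => ->;
  rewrite ?eqxx ?orbT.

Section Pattern.
Variable F : finFieldType.
Hypothesis char2 : (2%:R : F) = 0.

Variable k' : nat.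
Local Notation k := k'.+1.
Local Notation e i := (delta_mx 0 i : 'rV[F]_k).

Definition Hm (d : nat -> F) (w : 'rV[F]_k) : 'M[F]_k :=
  \matrix_(i, j) if (i : nat) == k' then w 0 j
                 else d i * ((j : nat) == i)%:R + ((j : nat) == i.+1)%:R.

Definition NN (w : 'rV[F]_k) : 'M[F]_k :=
  \matrix_(i, j) if odd i then
                   (if (i < k')%N then ((j : nat) == i.+1)%:R
                    else if odd j then 0 else w 0 j)
                 else 0.

Lemma NN2 w : NN w *m NN w = 0.
Proof.
apply/matrixP => i j; rewrite !mxE; apply: big1 => l _; rewrite !mxE.
case Ol: (odd l); last by rewrite mulr0.
case Oi: (odd i); last by rewrite mul0r.
case: ifP => _; last by rewrite mul0r.
case: eqP => [El|]; last by rewrite mul0r.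
by move: Ol; rewrite El /= Oi.
Qed.

Lemma rowH_lt d w (i : 'I_k) : (i < k')%N ->
  row i (Hm d w) = d i *: e i + e (inord i.+1).
Proof.
move=> ik; apply/rowP => j; rewrite !mxE (ltn_eqF ik) /=.
by have -> : (j == inord i.+1) = (j == i.+1 :> nat) by rewrite -val_eqE /= inordK.
Qed.

Lemma rowH_max d w : row ord_max (Hm d w) = w.
Proof. by apply/rowP => j; rewrite !mxE eqxx. Qed.

Lemma rowN_odd_lt w (i : 'I_k) : odd i -> (i < k')%N ->
  row i (NN w) = e (inord i.+1).
Proof.
move=> oi ik; apply/rowP => j; rewrite !mxE oi ik /=.
by have -> : (j == inord i.+1) = (j == i.+1 :> nat) by rewrite -val_eqE /= inordK.
Qed.

Lemma rowN_even w (i : 'I_k) : ~~ odd i -> row i (NN w) = 0.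
Proof. by move=> oi; apply/rowP => j; rewrite !mxE (negPf oi). Qed.

Lemma rowN_max w : odd k' ->
  row ord_max (NN w) = \row_j (if odd j then 0 else w 0 j).
Proof. by move=> ok; apply/rowP => j; rewrite !mxE /= ok ltnn. Qed.

Lemma mul_sum_row0 (y : 'rV[F]_k) (M : 'M[F]_k) :
  (forall j, y 0 j = 0 \/ row j M = 0) -> y *m M = 0.
Proof.
move=> h; rewrite mulmx_sum_row; apply: big1 => j _.
by case: (h j) => ->; rewrite ?scale0r ?scaler0.
Qed.


Lemma row_sub_scalar (M : 'M[F]_k) (i : 'I_k) x :
  e i *m (M - x%:M) = row i M - x *: e i.
Proof. by rewrite mulmxBr mul_mx_scalar rowE. Qed.

Lemma e_pl_cons (M : 'M[F]_k) (i : 'I_k) x s :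
  e i *m horner_mx M (pl (x :: s)) = (row i M - x *: e i) *m horner_mx M (pl s).
Proof. by rewrite pl_cons mulmxA row_sub_scalar. Qed.

Lemma DdecE d w : Hm d w = NN w + (Hm d w - NN w).
Proof. by rewrite addrC subrK. Qed.

Lemma inord_succ_max : (0 < k')%N -> (inord k'.-1.+1 : 'I_k) = ord_max.
Proof. by move=> k0; apply/val_inj; rewrite /= prednK // inordK. Qed.

Lemma ord_lt_max (i : 'I_k) : i != ord_max -> (i < k')%N.
Proof.
move=> ni; rewrite ltn_neqAle -ltnS ltn_ord andbT.
by apply: contra ni => /eqP E; apply/eqP/val_inj.
Qed.

Section Odd.
Variables (a b : F) (d : nat -> F) (w : 'rV[F]_k).
Hypothesis ek : ~~ odd k'.
Hypothesis ab : a != b.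
Hypothesis wa : w 0 ord_max != a.
Hypothesis wb : w 0 ord_max != b.
Hypothesis hd : forall i, (i < k')%N -> d i = if odd i then b else a.
Let D := Hm d w - NN w.

Lemma rowD_odd (i : 'I_k) : odd i -> row i D = b *: e i.
Proof.
move=> oi; have ik : (i < k')%N.
  by rewrite ltn_neqAle -ltnS ltn_ord andbT; apply: contraNneq ek => <-.
by rewrite /D linearB /= rowH_lt // rowN_odd_lt // hd // oi addrK.
Qed.

Lemma rowD_even (i : 'I_k) : ~~ odd i -> (i < k')%N ->
  row i D = a *: e i + e (inord i.+1).
Proof.
by move=> oi ik; rewrite /D linearB /= rowH_lt // rowN_even // hd // (negPf oi) subr0.
Qed.

Lemma rowD_max : row ord_max D = w.
Proof. by rewrite /D linearB /= rowH_max rowN_even // subr0. Qed.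

Lemma kill_ab (i : 'I_k) : (i < k')%N ->
  e i *m horner_mx D (pl [:: a; b]) = 0.
Proof.
move=> ik; rewrite e_pl_cons; case oi: (odd i).
  by rewrite rowD_odd // -scalerBl -scalemxAl e_pl_cons rowD_odd // subrr
     mul0mx scaler0.
rewrite rowD_even ?oi // addrC addKr e_pl_cons rowD_odd ?subrr ?mul0mx //.
by rewrite inordK ?ltnS //= oi.
Qed.

Lemma Dec_odd : Dec (Hm d w).
Proof.
exists (NN w), D; split; [exact: DdecE | exact: NN2 |].
apply: (@kill_rows _ _ _ [:: a; b; w 0 ord_max]).
  by rewrite /= !inE negb_or ab eq_sym wa eq_sym wb.
move=> i; have [->|ni] := eqVneq i ord_max.
  exists [:: w 0 ord_max; a; b].
    split; last by subl.
    by rewrite /= !inE negb_or wa wb ab.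
  rewrite e_pl_cons rowD_max; apply: mul_sum_row0 => j.
  have [->|nj] := eqVneq j ord_max.
    by left; rewrite !mxE !eqxx mulr1 subrr.
  right; rewrite rowE; apply: kill_ab.
  by rewrite ltn_neqAle -ltnS ltn_ord andbT; apply: contra nj => /eqP E; apply/eqP/val_inj.
have ik : (i < k')%N.
  by rewrite ltn_neqAle -ltnS ltn_ord andbT; apply: contra ni => /eqP E; apply/eqP/val_inj.
exists [:: a; b]; first by split; [rewrite /= inE ab | subl].
exact: kill_ab.
Qed.

End Odd.

Section Even.
Variables (b : F) (d : nat -> F) (w : 'rV[F]_k).
Hypothesis ok : odd k'.
Hypothesis wb : w 0 ord_max != b.
Hypothesis hdo : forall i, (i < k')%N -> odd i -> d i = b.
Hypothesis hde : forall i, (i < k')%N -> ~~ odd i -> d i != b.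
Hypothesis cw : d k'.-1 != w 0 ord_max.
Let D := Hm d w - NN w.
Let wl := w 0 ord_max.

Lemma k0 : (0 < k')%N.
Proof. by case: k' ok. Qed.

Lemma rowDe_odd (i : 'I_k) : odd i -> (i < k')%N -> row i D = b *: e i.
Proof.
by move=> oi ik; rewrite /D linearB /= rowH_lt // rowN_odd_lt // hdo // addrK.
Qed.

Lemma rowDe_even (i : 'I_k) : ~~ odd i -> (i < k')%N ->
  row i D = d i *: e i + e (inord i.+1).
Proof.
by move=> oi ik; rewrite /D linearB /= rowH_lt // rowN_even // subr0.
Qed.

Lemma rowDe_max : row ord_max D = \row_j (if odd j then w 0 j else 0).
Proof.
rewrite /D linearB /= rowH_max rowN_max //; apply/rowP => j; rewrite !mxE.
by case: (odd j); rewrite ?subr0 ?subrr.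
Qed.

Lemma kill_max : e ord_max *m horner_mx D (pl [:: wl; b]) = 0.
Proof.
rewrite e_pl_cons rowDe_max; apply: mul_sum_row0 => j.
have [->|nj] := eqVneq j ord_max.
  by left; rewrite !mxE /= ok !eqxx mulr1 subrr.
have jk := ord_lt_max nj.
case oj: (odd j).
  right; rewrite rowE e_pl_cons rowDe_odd // subrr mul0mx //.
by left; rewrite !mxE oj (negPf nj) mulr0 subr0.
Qed.

Let S := undup [:: b, wl & map d (iota 0 k')].

Lemma dS i : (i < k')%N -> d i \in S.
Proof. by move=> ik; rewrite mem_undup !inE map_f ?orbT // mem_iota. Qed.

Lemma Dec_even : Dec (Hm d w).
Proof.
exists (NN w), D; split; [exact: DdecE | exact: NN2 |].
apply: (@kill_rows _ _ _ S); first exact: undup_uniq.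
have wS : wl \in S by rewrite mem_undup !inE eqxx orbT.
have bS : b \in S by rewrite mem_undup !inE eqxx.
move=> i; have [->|ni] := eqVneq i ord_max.
  exists [:: wl; b]; last exact: kill_max.
  by split; [rewrite /= inE wb | subl].
have ik := ord_lt_max ni.
case oi: (odd i).
  exists [:: b]; first by split; [by [] | subl].
  by rewrite e_pl_cons rowDe_odd // subrr mul0mx.
have dib : d i != b by apply: hde; rewrite ?oi.
case: (boolP (i.+1 == k')) => [Ei|Ni].
  have Ec : d i = d k'.-1.
    suff -> : k'.-1 = i by [].
    by apply/eqP; rewrite -eqSS prednK ?k0 // eq_sym.
  exists [:: d i; wl; b].
    split; first by rewrite /= !inE negb_or Ec cw -Ec dib wb.
    by move=> x; rewrite !inE => /or3P[] /eqP ->; rewrite ?dS ?wS ?bS.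
  rewrite e_pl_cons rowDe_even ?oi // addrC addKr.
  have -> : (inord i.+1 : 'I_k) = ord_max by apply/val_inj; rewrite /= inordK (eqP Ei).
  exact: kill_max.
exists [:: d i; b].
  split; first by rewrite /= inE dib.
  by move=> x; rewrite !inE => /orP[] /eqP ->; rewrite ?dS ?bS.
have i1k : (i.+1 < k')%N by rewrite ltn_neqAle Ni ik.
rewrite e_pl_cons rowDe_even ?oi // addrC addKr e_pl_cons rowDe_odd ?subrr ?mul0mx //.
  by rewrite inordK //= oi.
by rewrite inordK.
Qed.

End Even.

End Pattern.


Section Choose.
Variable F : finFieldType.
Hypothesis char2 : (2%:R : F) = 0.
Hypothesis card4 : (4 <= #|F|)%N.
Hypothesis sqrtF : forall x : F, exists s, s ^+ 2 = x.

Lemma Dec_special (w : 'rV[F]_2) : w 0 ord_max = 0 -> Dec (Hm (fun _ => 0) w).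
Proof.
move=> w1; have [s s2] := sqrtF (w 0 0).
set H := Hm _ w.
exists (H + s%:M), (- s%:M); split; first by rewrite addrK.
  apply/matrixP => i j; rewrite !mxE !big_ord_recl big_ord0 !mxE /=.
  have [w0 ew0] : exists w0, w 0 0 = w0 by eexists.
  have wE (l : 'I_2) : w 0 l = if (l : nat) == 0%N then w0 else 0.
    by case: l => [[|[|//]] Hl] /=; rewrite -?w1 -?ew0; congr (w 0 _); apply: val_inj.
  rewrite ew0 in s2.
  case: i => [[|[|//]] Hi]; case: j => [[|[|//]] Hj] /=; rewrite !wE /=;
  rewrite ?mul0r ?add0r ?addr0 ?mulr0 ?mulr1 ?mul1r ?mulr1n ?mulr0n ?addr0 ?add0r.
  all: try by rewrite -?expr2 ?s2 ?(addxx char2) // addrC (addxx char2).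
  by rewrite mulrC (addxx char2).
have := @kill_rows F 1 (- s%:M) [:: - s] erefl.
apply => i; exists [:: - s].
  split; [by [] | exact: (fun x xs => xs)].
by rewrite pl_cons pl_nil mulmx1 raddfN subrr mulmx0.
Qed.

Lemma trH k' d (w : 'rV[F]_k'.+1) :
  \tr (Hm d w) = \sum_(i < k') d i + w 0 ord_max.
Proof.
rewrite /mxtrace big_ord_recr /= !mxE eqxx; congr (_ + _); apply: eq_bigr => i _.
by rewrite mxE /= (ltn_eqF (ltn_ord i)) eqxx mulr1 (ltn_eqF (ltnSn i)) addr0.
Qed.

Lemma pick_notin (s : seq F) : (size s < #|F|)%N -> exists x, x \notin s.
Proof.
move=> hs; case: (pickP (fun x => x \notin s)) => [x xs|h]; first by exists x.
suff : (#|F| <= size s)%N by rewrite leqNgt hs.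
apply: leq_trans (card_size s); apply: subset_leq_card; apply/subsetP => x _.
by have := h x; rewrite /= => /negbFE.
Qed.

Lemma mulrn2 (z : F) r : z *+ r = if odd r then z else 0.
Proof.
elim: r => [|r IH]; first by rewrite mulr0n.
by rewrite mulrS IH /=; case: (odd r); rewrite /= ?(addxx char2) ?addr0.
Qed.

Lemma neqF (u v : F) : (u != v) = (u + v != 0).
Proof. by rewrite -subr_eq0 (oppF char2). Qed.

Definition pat (x y b : F) (i : nat) := if i == 0%N then x else if odd i then b else y.

Lemma sum_alt (a b : F) r :
  \sum_(i < r.*2) (if odd i then b else a) = (a + b) *+ r.
Proof.
elim: r => [|r IH]; first by rewrite big_ord0.
rewrite doubleS !big_ord_recr /= IH odd_double /= mulrS.
by rewrite -addrA addrC.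
Qed.

Lemma sum_pat x y b r :
  \sum_(i < r.*2.+1) pat x y b i = x + (y + b) *+ r.
Proof.
elim: r => [|r IH]; first by rewrite big_ord1 /pat /= mulr0n addr0.
rewrite doubleS 2!big_ord_recr /= IH /pat /= odd_double /= mulrS.
by rewrite -addrA [b + y]addrC addrAC [RHS]addrA.
Qed.

Lemma sum_alt' (a b : F) n r : n = r.*2 ->
  \sum_(i < n) (if odd i then b else a) = (a + b) *+ r.
Proof. by move=> ->; apply: sum_alt. Qed.

Lemma sum_pat' x y b n r : n = r.*2.+1 ->
  \sum_(i < n) pat x y b i = x + (y + b) *+ r.
Proof. by move=> ->; apply: sum_pat. Qed.

Lemma neq2 (x y u v : F) : x != y -> u - v = x - y -> u != v.
Proof. by move=> xy e; rewrite -subr_eq0 e subr_eq0. Qed.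

Lemma decH_choose k' (t : F) (Phi : (nat -> F) -> 'rV[F]_k'.+1 -> Prop) :
  (forall d, exists w, \tr (Hm d w) = t /\ Phi d w) ->
  exists d w, Phi d w /\ Dec (Hm d w).
Proof.
move=> h.
have c4 : forall s : seq F, (size s <= 3)%N -> exists x, x \notin s.
  by move=> s hs; apply: pick_notin; apply: leq_ltn_trans card4.
case ok: (odd k'); last first.
  have [a at_] := c4 [:: t] isT.
  have [b bta] := c4 [:: t; a] isT.
  move: at_ bta; rewrite !inE !negb_or => ta /andP[tb ab].
  have [w [tw Pw]] := h (fun i => if odd i then b else a).
  exists (fun i => if odd i then b else a), w; split => //.
  have k2 : k' = (k'./2).*2 by rewrite -{1}(odd_double_half k') ok.
  move: tw; rewrite trH (sum_alt' _ _ k2) mulrn2 => tw.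
  have wl : w 0 ord_max = t + (if odd k'./2 then a + b else 0).
    by rewrite -tw; set c := (if _ then _ else _); rewrite addrC addrA (addxx char2) add0r.
  apply: Dec_odd; rewrite ?ok // ?wl.
  - by rewrite eq_sym.
  - by case: (odd _) => /=; [apply: (neq2 tb) | apply: (neq2 ta)]; rewrite !(oppF char2); ring: char2.
  - by case: (odd _) => /=; [apply: (neq2 ta) | apply: (neq2 tb)]; rewrite !(oppF char2); ring: char2.
case: (boolP ((k' == 1%N) && (t == 0))) => [/andP[/eqP k1 /eqP t0]|nspec].
  subst k'; have [w [tw Pw]] := h (fun _ => 0).
  exists (fun _ => 0), w; split => //; apply: Dec_special.
  by move: tw; rewrite trH big_ord1 add0r t0.
have [y yt] := c4 [:: 0; t] isT.
have [b byt] := c4 [:: 0; t; y] isT.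
move: yt byt; rewrite !inE !negb_or => /andP[y0 yt] /and3P[b0 bt by_].
have [w [tw Pw]] := h (pat 0 y b).
exists (pat 0 y b), w; split => //.
have k2 : k' = (k'./2).*2.+1 by rewrite -{1}(odd_double_half k') ok.
move: tw; rewrite trH (sum_pat' _ _ _ k2) add0r mulrn2 => tw.
have wl : w 0 ord_max = t + (if odd k'./2 then y + b else 0).
  by rewrite -tw; set c := (if _ then _ else _); rewrite addrC addrA (addxx char2) add0r.
apply: (@Dec_even _ _ b); rewrite ?ok // ?wl.
- by case: (odd _) => /=; [apply: (neq2 yt) | apply: (neq2 bt)]; rewrite !(oppF char2); ring: char2.
- by move=> i _ oi; rewrite /pat oi; case: (i =P 0%N) => // i0; rewrite i0 in oi.
- by move=> i _ oi; rewrite /pat (negPf oi); case: (i =P 0%N) => _; rewrite eq_sym.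
- have -> : k'.-1 = (k'./2).*2 by rewrite {1}k2.
  rewrite /pat; case: (k'./2 =P 0%N) => [r0|r0] /=.
    rewrite r0 /= addr0 eq_sym; apply: contra nspec => /eqP t0.
    by rewrite t0 eqxx andbT k2 r0.
  have -> : ((k'./2).*2 == 0%N) = false by rewrite double_eq0; apply/negbTE/eqP.
  rewrite odd_double.
  by case: (odd _) => /=; [apply: (neq2 bt) | apply: (neq2 yt)]; rewrite !(oppF char2); ring: char2.
Qed.
End Choose.


Section Chain.
Variable F : finFieldType.

Definition kr n (A : 'M[F]_n.+1) (v : 'rV[F]_n.+1) k : 'M[F]_(k, n.+1) :=
  \matrix_(i < k) (v *m A ^+ i).

Definition pc (d : nat -> F) i : {poly F} := pl (map d (iota 0 i)).

Lemma pcS d i : pc d i.+1 = pc d i * ('X - (d i)%:P).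
Proof. by rewrite /pc /pl -addn1 iotaD map_cat big_cat /= big_seq1. Qed.

Lemma size_pc d i : size (pc d i) = i.+1.
Proof. by rewrite /pc /pl size_prod_XsubC size_map size_iota. Qed.

Lemma monic_pc d i : pc d i \is monic.
Proof. exact: monic_prod_XsubC. Qed.

Lemma poly_wide (p : {poly F}) k : (size p <= k)%N -> \poly_(j < k) p`_j = p.
Proof.
move=> sk; apply/polyP => m; rewrite coef_poly; case: ltnP => // km.
by rewrite nth_default // (leq_trans sk km).
Qed.

Lemma horner_wide n (A : 'M[F]_n.+1) (p : {poly F}) k : (size p <= k)%N ->
  horner_mx A p = \sum_(j < k) p`_j *: A ^+ j.
Proof.
move=> sk; rewrite -{1}(poly_wide sk) poly_def linear_sum /=.
by apply: eq_bigr => j _; rewrite linearZ /= rmorphXn /= horner_mx_X.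
Qed.

Section Fix.
Variables (n k' : nat) (A : 'M[F]_n.+1) (v : 'rV[F]_n.+1) (d : nat -> F).
Local Notation k := k'.+1.
Local Notation W := (kr A v k).
Hypothesis Wfree : row_free W.
Hypothesis Wstab : stablemx W A.

Definition Tc : 'M[F]_k := \matrix_(i, j) (pc d i)`_j.

Lemma Tc_unit : Tc \in unitmx.
Proof.
rewrite unitmxE det_trig; last first.
  apply/is_trig_mxP => i j ij; rewrite mxE nth_default // size_pc //.
rewrite (eq_bigr (fun _ => 1)) ?big1_eq ?unitr1 // => i _.
rewrite mxE; have := monic_pc d i; rewrite monicE /lead_coef size_pc /=.
by move/eqP.
Qed.

Lemma rowCn (i : 'I_k) : row i (Tc *m W) = v *m horner_mx A (pc d i).
Proof.
rewrite row_mul mulmx_sum_row (horner_wide A (k := k)) ?size_pc //.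
rewrite mulmx_sumr; apply: eq_bigr => j _; rewrite !mxE rowK.
by rewrite -scalemxAr.
Qed.

Local Notation Cn := (Tc *m W).
Definition wC : 'rV[F]_k := row ord_max (Cn *m A) *m pinvmx Cn.

Lemma W_Cn : (W <= Cn)%MS.
Proof. by rewrite -{1}(mulKmx Tc_unit W) submxMl. Qed.

Lemma Cn_stab : (Cn *m A <= Cn)%MS.
Proof.
rewrite -mulmxA (submx_trans (submxMl _ _)) //.
exact: submx_trans Wstab W_Cn.
Qed.

Lemma pcX i : pc d i * 'X = pc d i.+1 + d i *: pc d i.
Proof. by rewrite pcS mulrBr -mul_polyC [_%:P * _]mulrC subrK. Qed.

Lemma Cn_rel : Cn *m A = Hm d wC *m Cn.
Proof.
apply/row_matrixP => i; rewrite [in RHS]row_mul.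
have [->|ni] := eqVneq i ord_max.
  rewrite rowH_max /wC mulmxKpV //.
  exact: submx_trans (row_sub _ _) Cn_stab.
have ik := ord_lt_max ni.
rewrite rowH_lt // row_mul rowCn mulmxDl -scalemxAl -!rowE !rowCn inordK //.
rewrite -mulmxA -{2}(horner_mx_X A) -[_ *m horner_mx A 'X]/(_ * _) -rmorphM /= pcX.
by rewrite linearD /= linearZ /= mulmxDr -scalemxAr addrC.
Qed.

Lemma Cn_trace : \tr (Hm d wC) = \tr (W *m A *m pinvmx W).
Proof.
set H0 := W *m A *m pinvmx W.
have H0W : H0 *m W = W *m A by rewrite mulmxKpV.
have e1 : Hm d wC *m Tc = Tc *m H0.
  apply: (row_free_inj Wfree).
  by rewrite -[RHS]mulmxA H0W mulmxA Cn_rel mulmxA.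
have -> : Hm d wC = Tc *m H0 *m invmx Tc by rewrite -e1 mulmxK // Tc_unit.
by rewrite -mulmxA mxtrace_mulC mulmxKV ?Tc_unit.
Qed.

End Fix.

Lemma chain_exists n k' (A : 'M[F]_n.+1) v :
  row_free (kr A v k'.+1) -> stablemx (kr A v k'.+1) A ->
  forall d, exists w, \tr (Hm d w) = \tr (kr A v k'.+1 *m A *m pinvmx (kr A v k'.+1)) /\
    exists T, T \in unitmx /\
      (T *m kr A v k'.+1) *m A = Hm d w *m (T *m kr A v k'.+1).
Proof.
move=> Wf Ws d; exists (wC k' A v d); split; first exact: Cn_trace.
by exists (Tc k' d); split; [exact: Tc_unit | exact: Cn_rel].
Qed.
End Chain.


Section Krylov.
Variable F : finFieldType.

Lemma kr_row n (A : 'M[F]_n.+1) v k (i : 'I_k) : row i (kr A v k) = v *m A ^+ i.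
Proof. exact: rowK. Qed.

Lemma kr_stab n (A : 'M[F]_n.+1) v k :
  row_free (kr A v k) -> ~~ row_free (kr A v k.+1) -> stablemx (kr A v k) A.
Proof.
move=> fk nfk.
have xin : (v *m A ^+ k <= kr A v k)%MS.
  apply: contraNT nfk => xn; apply/inj_row_free => c c0.
  set c' : 'rV_k := \row_(i < k) c 0 (widen_ord (leqnSn k) i).
  have E : c *m kr A v k.+1 = c' *m kr A v k + c 0 ord_max *: (v *m A ^+ k).
    rewrite [c *m _]mulmx_sum_row [c' *m _]mulmx_sum_row big_ord_recr /= kr_row.
    by congr (_ + _); apply: eq_bigr => i _; rewrite !kr_row mxE.
  have cm0 : c 0 ord_max = 0.
    case: (eqVneq (c 0 ord_max) 0) => // cn; exfalso; move/negP: xn; apply.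
    rewrite c0 in E.
    have -> : v *m A ^+ k = (c 0 ord_max)^-1 *: (- (c' *m kr A v k)).
      apply: (scalerI cn); rewrite scalerA mulfV // scale1r.
      by apply/eqP; rewrite -addr_eq0 addrC -E.
    by rewrite -mulNmx scalemxAl submxMl.
  have c'0 : c' = 0.
    apply/eqP; rewrite -(mulmx_free_eq0 _ fk); apply/eqP.
    by move: E; rewrite c0 cm0 scale0r addr0 => <-.
  apply/rowP => j; rewrite mxE.
  have [->|nj] := eqVneq j ord_max; first by [].
  have jk := ord_lt_max nj.
  have := congr1 (fun u : 'rV_k => u 0 (Ordinal jk)) c'0; rewrite !mxE.
  by have -> : widen_ord (leqnSn k) (Ordinal jk) = j by apply: val_inj.
apply/row_subP => i; rewrite row_mul kr_row -mulmxA -[A ^+ i *m A]/(A ^+ i * A) -exprSr.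
have [ik|] := ltnP i.+1 k.
  by rewrite -(kr_row A v (Ordinal ik)) row_sub.
move=> ki; have -> : i.+1 = k by apply/eqP; rewrite eqn_leq ki ltn_ord.
exact: xin.
Qed.

Lemma trX n (B : 'M[F]_n.+1) j : (B ^+ j)^T = B^T ^+ j.
Proof.
elim: j => [|j IH]; first by rewrite !expr0 trmx1.
by rewrite exprS exprSr -IH -!mulmxE trmx_mul.
Qed.

Lemma dual n k (B : 'M[F]_n.+1) v : row_free (kr B v k) ->
  exists f, (kr B v k *m (kr B^T f k)^T) \in unitmx.
Proof.
case: k => [|k'] fr; first by exists 0; rewrite unitmxE det_mx00 unitr1.
have [X hX] := row_freeP fr.
pose c : 'cV_(n.+1) := X *m delta_mx ord_max 0.
exists c^T.
set M := kr B v k'.+1 *m _.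
have krc : kr B v k'.+1 *m c = delta_mx ord_max 0 by rewrite /c mulmxA hX mul1mx.
have Mij i j : M i j = (v *m B ^+ (i + j) *m c) 0 0.
  rewrite exprD -mulmxE mulmxA -(mulmxA _ (B ^+ j)) !mxE; apply: eq_bigr => l _.
  have e : c^T *m B^T ^+ j = (B ^+ j *m c)^T by rewrite [RHS]trmx_mul -trX.
  congr (_ * _); first by rewrite mxE.
  by rewrite [in LHS]mxE [in LHS]mxE e mxE.
have val m : (m < k'.+1)%N -> (v *m B ^+ m *m c) 0 0 = (m == k')%:R.
  move=> mk; have := congr1 (fun M : 'M_(k'.+1, 1) => (row (Ordinal mk) M) 0 0) krc.
  by rewrite /= row_mul kr_row => ->; rewrite !mxE /= andbT.
pose R : 'M[F]_k'.+1 := \matrix_(i, j) ((i : nat) == (k' - j)%N)%:R.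
have MR i j : (M *m R) i j = M i (rev_ord j).
  rewrite mxE (bigD1 (rev_ord j)) //= big1 ?addr0.
    by rewrite [R _ _]mxE /= eqxx mulr1.
  move=> l /negPf nl; rewrite [R _ _]mxE.
  suff -> : ((l : nat) == (k' - j)%N) = false by rewrite mulr0.
  by apply: negbTE; apply: contraFN nl => /eqP e; apply/eqP/val_inj; rewrite /= ?subSS.
have MRu : M *m R \in unitmx.
  rewrite unitmxE det_trig.
    rewrite (eq_bigr (fun _ => 1)) ?big1_eq ?unitr1 // => i _.
    rewrite MR Mij /= ?subSS val.
      by rewrite subnKC ?eqxx // -ltnS.
    by rewrite subnKC // -ltnS.
  apply/is_trig_mxP => i j ij; rewrite MR Mij /= ?subSS val.
    rewrite (_ : (i + (k' - j) == k')%N = false) //; apply/negbTE.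
    rewrite neq_ltn; apply/orP; left.
    by rewrite -ltn_subRL ltn_sub2l // (leq_trans ij) // -ltnS.
  rewrite ltnS (@leq_trans (j + (k' - j))%N) //.
    by rewrite leq_add2r ltnW.
  by rewrite subnKC // -ltnS.
rewrite -row_free_unit -row_leq_rank.
by rewrite -{1}(mxrank_unit MRu) mxrankM_maxl.
Qed.
End Krylov.


Section MainProof.
Variable F : finFieldType.
Hypothesis char2 : (2%:R : F) = 0.
Hypothesis card4 : (4 <= #|F|)%N.
Hypothesis sqrtF : forall x : F, exists s, s ^+ 2 = x.

Lemma unit_free_l k n (X Y : 'M[F]_(k, n)) : X *m Y^T \in unitmx -> row_free X.
Proof.
by move=> u; rewrite /row_free eqn_leq rank_leq_row /= -{1}(mxrank_unit u) mxrankM_maxl.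
Qed.

Lemma unit_free_r k n (X Y : 'M[F]_(k, n)) : X *m Y^T \in unitmx -> row_free Y.
Proof.
move=> u; rewrite /row_free eqn_leq rank_leq_row /= -{1}(mxrank_unit u).
by rewrite -(mxrank_tr Y) mxrankM_maxr.
Qed.

Lemma main_step n (A : 'M[F]_n.+1) :
  (forall l (A' : 'M[F]_l), (l < n.+1)%N -> Dec A') -> Dec A.
Proof.
move=> IH.
pose P := fun p : 'rV[F]_n.+1 * 'I_n.+2 => row_free (kr A p.1 p.2).
have P0 : P (0, ord0) by rewrite /P /row_free -leqn0 rank_leq_row.
case: (arg_maxnP (fun p : 'rV[F]_n.+1 * 'I_n.+2 => (p.2 : nat)) P0) => [[v kk]] /= Pvk maxp.
have maxk : forall v' (k : nat), row_free (kr A v' k) -> (k <= kk)%N.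
  move=> v' k fk; have kn : (k < n.+2)%N.
    by rewrite ltnS -(eqP fk) rank_leq_col.
  exact: (maxp (v', Ordinal kn)).
have k1 : (0 < kk)%N.
  apply: (maxk (delta_mx 0 0)); rewrite /row_free.
  have -> : kr A (delta_mx 0 0) 1 = delta_mx 0 0.
    by apply/matrixP => i j; rewrite ord1 [LHS]mxE expr0 -idmxE mulmx1.
  have e0 : (delta_mx 0 0 : 'rV[F]_n.+1) != 0.
    by apply/eqP => /matrixP/(_ 0 0); rewrite !mxE /= => /eqP; rewrite oner_eq0.
  by rewrite rank_rV e0.
move: Pvk maxk; rewrite /P /=.
case: kk k1 maxp => [[|k'] //= kn] _ _ Wf maxk.
have nomore v' : ~~ row_free (kr A v' k'.+2) by apply/negP => /maxk; rewrite ltnn.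
have Ws := kr_stab Wf (nomore v).
have [f Mu] := dual Wf.
set W := kr A v k'.+1 in Wf Ws Mu *.
set fk := kr A^T f k'.+1 in Mu *.
have fkf : row_free fk := unit_free_r Mu.
have fkn : ~~ row_free (kr A^T f k'.+2).
  apply/negP => /dual [f'] /unit_free_r; rewrite trmxK.
  by apply/negP; apply: nomore.
have fks := kr_stab fkf fkn.
set U := kermx fk^T.
have Us : (U *m A <= U)%MS.
  apply/sub_kermxP.
  have eS : fk *m A^T = (fk *m A^T *m pinvmx fk) *m fk by rewrite mulmxKpV.
  rewrite -mulmxA.
  have -> : A *m fk^T = fk^T *m (fk *m A^T *m pinvmx fk)^T.
    by rewrite -trmx_mul -eS trmx_mul trmxK.
  by rewrite mulmxA mulmx_ker mul0mx.
set BU := row_base U.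
have BUU : (BU :=: U)%MS := eq_row_base U.
have BUk : BU *m fk^T = 0 by apply/sub_kermxP; rewrite BUU.
have rU : \rank U = (n.+1 - k'.+1)%N.
  by rewrite mxrank_ker mxrank_tr (eqP fkf).
pose Phi := fun (d : nat -> F) (w : 'rV[F]_k'.+1) =>
  exists T, T \in unitmx /\ (T *m W) *m A = Hm d w *m (T *m W).
have [d [w [[T [Tu Trel]] DH]]] :=
  @decH_choose F char2 card4 sqrtF k' _ Phi (chain_exists Wf Ws).
set Cn := T *m W in Trel.
clear P P0 maxk.
set P := col_mx Cn BU.
have Pfree : row_free P.
  apply/inj_row_free => c cP.
  rewrite -[c]hsubmxK mul_row_col in cP.
  have c1 : lsubmx c = 0.
    have := congr1 (mulmx^~ fk^T) cP.
    rewrite mul0mx mulmxDl -(mulmxA (rsubmx c)) BUk mulmx0 addr0.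
    move/eqP; rewrite -mulmxA -mulmxA mulmx_free_eq0 ?row_free_unit ?unitmx_mul ?Tu //.
    by move/eqP.
  have c2 : rsubmx c = 0.
    by move: cP; rewrite c1 mul0mx add0r => /eqP; rewrite mulmx_free_eq0 ?row_base_free // => /eqP.
  by rewrite -[c]hsubmxK c1 c2 row_mx0.
have kn1 : (k'.+1 <= n.+1)%N by [].
have Pfull : row_full P.
  by rewrite -col_leq_rank (eqP Pfree) rU subnKC.
set Q := pinvmx P.
have PQ : P *m Q = 1%:M := mulmxVp Pfree.
have QP : Q *m P = 1%:M.
  by have := mulmxKpV (submx_full 1%:M Pfull); rewrite mul1mx.
set A' := BU *m A *m pinvmx BU.
have BUA : BU *m A = A' *m BU.
  rewrite /A' mulmxKpV //.
  rewrite BUU; apply: submx_trans Us; apply: submxMr; rewrite BUU //.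
have blockrel : P *m A = block_mx (Hm d w) 0 0 A' *m P.
  by rewrite /P mul_col_mx mul_block_col Trel BUA !mul0mx addr0 add0r.
have DA' : Dec A'.
  apply: IH; rewrite rU subSS ltnS leq_subr //.
have E : block_mx (Hm d w) 0 0 A' = P *m A *m Q by rewrite blockrel -mulmxA PQ mulmx1.
have -> : A = Q *m block_mx (Hm d w) 0 0 A' *m P.
  by rewrite E (mulmxA Q (P *m A) Q) (mulmxA Q P A) QP mul1mx -mulmxA QP mulmx1.
exact: Dec_conj QP PQ (Dec_block DH DA').
Qed.
Lemma main n (A : 'M[F]_n) : Dec A.
Proof.
elim/ltn_ind: n A => -[|n] IH A; first exact: Dec0.
by apply: main_step => l A' ln; apply: IH.
Qed.
End MainProof.

Theorem corollary3p2 (F : finFieldType) (m : nat) (hm : (2 <= m)%N)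
  (hcard : #|F| = (2 ^ m)%N) (n : nat) (A : 'M[F]_n) :
  exists N D : 'M[F]_n,
    [/\ A = N + D, N *m N = 0 & mxpow D (2 ^ m) = D].
Proof.
have char2 : (2%:R : F) = 0 by apply: pcharf0; apply: (card_finPcharP hcard).
have card4 : (4 <= #|F|)%N by rewrite hcard (leq_pexp2l (isT : (0 < 2)%N) hm).
have sqrtF (x : F) : exists s, s ^+ 2 = x.
  exists (x ^+ (2 ^ m.-1)); rewrite -exprM -expnSr prednK ?(leq_trans _ hm) //.
  by rewrite -hcard expf_card.
have [N [D [h1 h2 h3]]] := main char2 card4 sqrtF A.
by exists N, D; split => //; rewrite -hcard.
Qed.
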